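(* Let $n$ be a security parameter and $F\colon\{0,1\}^{\tilde n}\to\{0,1\}^m$ a function. Fix a family $\mathcal{G}=\{g\colon\{0,1\}^{\tilde n}\to\{0,1\}^\ell\}$ of pairwise independent hash functions, and define $F'\colon\{0,1\}^{\tilde n}\times\mathcal{G}\to\{0,1\}^m\times\mathcal{G}\times\{0,1\}^\ell$ by $F'(x,g)=(F(x),g,g(x))$. Then: (i) if $F^{-1}$ has real min-entropy at least $k$, then $(F')^{-1}$ has real min-entropy at least $k-\ell-s$ for any $s=\omega(\log n)$; (ii) if $F^{-1}$ has accessible max-entropy at most $k$, then $(F')^{-1}$ has accessible max-entropy at most $\max\{k-\ell+s,0\}$ for any $s=\omega(\log n)$.
   Context: A family $\mathcal{G}$ is pairwise independent if for all distinct $x_1,x_2$, for $g$ uniform in $\mathcal{G}$, $g(x_1),g(x_2)$ are independent and uniform. For a function $G$ with domain $\mathcal{D}$ and $X$ uniform on $\mathcal{D}$: $G^{-1}$ has real min-entropy at least $k$ if there is a negligible $\varepsilon(n)$ with $\Pr_x[\log|G^{-1}(G(x))|\ge k]\ge1-\varepsilon(n)$. A $G$-collision-finder is a randomized algorithm $A$ with $A(x;r)\in G^{-1}(G(x))$ for all $x,r$; $R$ denotes uniform coins. $G^{-1}$ has accessible max-entropy at most $k$ if for every probabilistic polynomial-time $G$-collision-finder $A$ there are sets $\{\mathcal{L}(x)\}$, each of size at most $2^k$, with $x\in\mathcal{L}(x)$, and a negligible $\varepsilon$ such that $\Pr[A(X;R)\in\mathcal{L}(X)]\ge1-\varepsilon(n)$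 for all sufficiently large $n$. *)

(* Defs.v *)
From HB Require Import structures.
From mathcomp Require Import all_boot all_order all_algebra.
From mathcomp Require Import all_classical all_reals.
From mathcomp Require Import exp.
Set Implicit Arguments. Unset Strict Implicit. Unset Printing Implicit Defensive.
Import Order.TTheory GRing.Theory Num.Theory.
Local Open Scope ring_scope.

Definition BS (k : nat) : finType := (k.-tuple bool).

Section Defs.
Variable R : realType.

Definition log2 (x : R) : R := ln x / ln 2.

Definition prob (T : finType) (P : pred T) : R :=
  #|[set x | P x]|%:R / #|T|%:R.

Definition negligible (eps : nat -> R) : Prop :=
  forall c : nat, exists N : nat, forall n : nat, (N <= n)%N ->
    `|eps n| <= (n%:R ^+ c)^-1.

Definition omega_log (s : nat -> R) : Prop :=
  forall C : R, 0 < C -> exists N : nat, forall n : nat, (N <= n)%N ->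
    C * ln (n%:R) <= s n.

Definition pairwise_independent (nin l : nat) (G : finType)
    (h : G -> BS nin -> BS l) : Prop :=
  forall x1 x2 : BS nin, x1 != x2 -> forall y1 y2 : BS l,
    prob [pred g : G | (h g x1 == y1) && (h g x2 == y2)]
    = prob [pred g : G | h g x1 == y1] * prob [pred g : G | h g x2 == y2]
    /\ prob [pred g : G | h g x1 == y1] = ((2 ^ l)%:R)^-1
    /\ prob [pred g : G | h g x2 == y2] = ((2 ^ l)%:R)^-1.

Definition preim_size (D C : finType) (f : D -> C) (x : D) : nat :=
  #|[set x' | f x' == f x]|.

Definition real_min_entropy_ge (D C : nat -> finType)
    (f : forall n, D n -> C n) (k : nat -> R) : Prop :=
  exists eps : nat -> R, negligible eps /\
    forall n : nat,
      1 - eps n <= prob [pred x : D n | k n <= log2 (preim_size (f n) x)%:R].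

(* a randomized algorithm D n -> D n, with uniform coins in the finite type coin n *)
Record ralg (D : nat -> finType) := RAlg {
  coin : nat -> finType;
  run : forall n, D n -> coin n -> D n }.
Arguments coin {D} r n.
Arguments run {D} r n.

Definition collision_finder (D C : nat -> finType) (f : forall n, D n -> C n)
    (A : ralg D) : Prop :=
  forall n (x : D n) (r : coin A n), f n (run A n x r) = f n x.

(* f^{-1} has accessible max-entropy at most k, relative to a class Eff of
   "efficient" (PPT) algorithms *)
Definition acc_max_entropy_le (Eff : forall D : nat -> finType, ralg D -> Prop)
    (D C : nat -> finType) (f : forall n, D n -> C n) (k : nat -> R) : Prop :=
  forall A : ralg D, Eff D A -> collision_finder f A ->
    exists L : forall n, D n -> {set D n},
      (forall n (x : D n), (#|L n x|%:R : R) <= powR 2 (k n)) /\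
      (forall n (x : D n), x \in L n x) /\
      exists eps : nat -> R, negligible eps /\
        exists N : nat, forall n : nat, (N <= n)%N ->
          1 - eps n <= prob [pred xr : (D n * coin A n)%type |
                               run A n xr.1 xr.2 \in L n xr.1].
End Defs.
Arguments coin {D} r n.
Arguments run {D} r n.

Definition DomF' (nt : nat -> nat) (G : nat -> finType) (n : nat) : finType :=
  (BS (nt n) * G n)%type.
Definition CodF' (m l : nat -> nat) (G : nat -> finType) (n : nat) : finType :=
  (BS (m n) * G n * BS (l n))%type.

Definition Fprime (nt m l : nat -> nat) (G : nat -> finType)
    (F : forall n, BS (nt n) -> BS (m n))
    (h : forall n, G n -> BS (nt n) -> BS (l n))
    (n : nat) (xg : DomF' nt G n) : CodF' m l G n :=
  (F n xg.1, xg.2, h n xg.2 xg.1).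

Definition proj_alg (nt : nat -> nat) (G : nat -> finType)
    (A' : ralg (DomF' nt G)) : ralg (fun n => BS (nt n)) :=
  @RAlg (fun n => BS (nt n)) (fun n => (G n * coin A' n)%type)
    (fun n x gr => (run A' n (x, gr.1) gr.2).1).

(* Main.v *)
Require Import Defs.
From HB Require Import structures.
From mathcomp Require Import all_boot all_order all_algebra.
From mathcomp Require Import all_classical all_reals.
From mathcomp Require Import exp.
From mathcomp Require Import sequences.
From mathcomp Require Import ring lra zify.
Import Order.TTheory GRing.Theory Num.Theory.
Local Open Scope ring_scope.


Section Helpers.
Variable R : realType.

Lemma ln2_gt0 : 0 < ln (2 : R).
Proof. by apply: ln_gt0; rewrite ltr1n. Qed.

Lemma powR2E (a : R) : powR 2 a = expR (a * ln 2).
Proof. by rewrite /powR pnatr_eq0. Qed.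

Lemma expR_nat_ln (c : nat) (x : R) : 0 < x -> expR (c%:R * ln x) = x ^+ c.
Proof.
move=> x0; rewrite mulr_natl -lnXn //; apply/eqP; rewrite lnK_eq.
by rewrite exprn_gt0.
Qed.

Lemma e2_nat (l : nat) : expR (l%:R * ln (2:R)) = (2 ^ l)%:R.
Proof. by rewrite expR_nat_ln // natrX. Qed.

Lemma log2_geE (a : R) (c : nat) : (0 < c)%N ->
  (a <= log2 c%:R) = (expR (a * ln 2) <= c%:R).
Proof.
move=> c0; rewrite /log2 ler_pdivlMr ?ln2_gt0 //.
have E : c%:R = expR (ln c%:R) :> R by apply/esym/eqP; rewrite lnK_eq ltr0n.
by rewrite [in RHS]E ler_expR.
Qed.

Lemma cardR_sum (T : finType) (P : pred T) :
  (#|[set x | P x]|%:R : R) = \sum_x (P x)%:R.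
Proof.
rewrite -sum1_card natr_sum big_mkcond /=; apply: eq_bigr => x _.
by rewrite inE; case: (P x).
Qed.

Lemma card_sum_pred (T : finType) (P : pred T) :
  (#|[set x | P x]|%:R : R) = \sum_(x | P x) 1.
Proof.
rewrite cardR_sum [RHS]big_mkcond /=; apply: eq_bigr => x _.
by case: (P x).
Qed.

Lemma sum_const_pred (T : finType) (P : pred T) (c : R) :
  \sum_(x | P x) c = #|[set x | P x]|%:R * c.
Proof.
by rewrite card_sum_pred mulr_suml; apply: eq_bigr => x _; rewrite mul1r.
Qed.

Lemma sum_constT (T : finType) (c : R) : \sum_(x : T) c = #|T|%:R * c.
Proof. by rewrite sumr_const mulr_natl. Qed.

Lemma probE (T : finType) (P : pred T) :
  prob R P = (\sum_x (P x)%:R) / #|T|%:R.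
Proof. by rewrite /prob cardR_sum. Qed.

Lemma sum_pair (A B : finType) (f : A * B -> R) :
  \sum_z f z = \sum_a \sum_b f (a, b).
Proof. by rewrite pair_big /=; apply: eq_bigr => -[a b]. Qed.

Lemma sum_pt (Y : finType) (y0 : Y) (P : pred Y) :
  \sum_y ((P y) && (y == y0))%:R = (P y0)%:R :> R.
Proof.
rewrite (bigD1 y0) //= eqxx andbT big1 ?addr0 // => y /negbTE ->.
by rewrite andbF.
Qed.

Lemma card_BS (l : nat) : #|BS l| = (2 ^ l)%N.
Proof. by rewrite card_tuple card_bool. Qed.

End Helpers.



Section P1.
Variable R : realType.

Lemma card_partition_sum (X V : finType) (F : X -> V) :
  (#|X|%:R : R) = \sum_v #|[set x | F x == v]|%:R.
Proof.
rewrite -sum1_card natr_sum (partition_big F xpredT) //=.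
apply: eq_bigr => v _; rewrite card_sum_pred.
by apply: eq_bigl => x.
Qed.

Lemma bad_bound (X Y V : finType) (F : X -> V) (hg : X -> Y) (k a : R) :
  \sum_x ((expR (k * ln 2) <= #|[set x' | F x' == F x]|%:R) &&
          (#|[set x' | (F x' == F x) && (hg x' == hg x)]|%:R < expR (a * ln 2)))%:R
  <= #|X|%:R * (#|Y|%:R * expR (a * ln 2) / expR (k * ln 2)) :> R.
Proof.
set E := expR (k * ln 2); set T := expR (a * ln 2).
have E0 : 0 < E by apply: expR_gt0.
have T0 : 0 < T by apply: expR_gt0.
have K0 : 0 <= #|Y|%:R * T / E by rewrite divr_ge0 ?mulr_ge0 ?ler0n ?ltW.
rewrite (@card_partition_sum _ _ F) mulr_suml (partition_big F xpredT) //=.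
apply: ler_sum => v _.
set cv := (#|[set x | F x == v]|%:R : R).
rewrite (eq_bigr (fun x => ((E <= cv) &&
   (#|[set x' | (F x' == v) && (hg x' == hg x)]|%:R < T))%:R)); last first.
  by move=> x /= /eqP ->.
have [Ecv|Ecv] := boolP (E <= cv); last first.
  rewrite big1 //.
  by apply: mulr_ge0 => //; apply: ler0n.
rewrite (partition_big hg xpredT) //=.
apply: (@le_trans _ _ (\sum_(y : Y) T)).
  apply: ler_sum => y _.
  rewrite (eq_bigr (fun x : X => ((#|[set x' | (F x' == v) && (hg x' == y)]|%:R : R) < T)%R%:R)); last first.
    by move=> x /andP[_ /eqP ->].
  rewrite sum_const_pred.
  set c := (#|[set x | (F x == v) && (hg x == y)]|%:R : R).
  have -> : c = #|[set x' | (F x' == v) && (hg x' == y)]|%:R by [].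
  case: ltrP => H; first by rewrite mulr1 ltW.
  by rewrite mulr0 ltW.
rewrite sum_constT.
rewrite mulrA -[X in X <= _](@mulfK _ E) //; last by rewrite gt_eqF.
apply: ler_wpM2r; first by rewrite invr_ge0 ltW.
rewrite [cv * _]mulrC; apply: ler_wpM2l => //.
by rewrite mulr_ge0 ?ler0n ?ltW.
Qed.

End P1.



Section P1b.
Variable R : realType.

Lemma preim_pair (X G V Y : finType) (F : X -> V) (h : G -> X -> Y) (x : X) (g : G) :
  #|[set z : X * G | (F z.1, z.2, h z.2 z.1) == (F x, g, h g x)]| =
  #|[set x' | (F x' == F x) && (h g x' == h g x)]|.
Proof.
apply/eqP; rewrite -(eqr_nat R) !cardR_sum sum_pair; apply/eqP.
apply: eq_bigr => x' _.
rewrite -(@sum_pt R _ g (fun g' => (F x' == F x) && (h g' x' == h g x))).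
apply: eq_bigr => g' _ /=.
rewrite !xpair_eqE.
case: (eqVneq g' g) => [->|ne]; first by rewrite !andbT.
by rewrite !andbF.
Qed.

Lemma card_self_gt0 (X : finType) (P : X -> pred X) (x : X) :
  P x x -> (0 < #|[set x' | P x x']|)%N.
Proof. by move=> Px; apply/card_gt0P; exists x; rewrite inE. Qed.

Lemma part1_n (X G V : finType) (l : nat) (F : X -> V) (h : G -> X -> BS l)
    (k s eps : R) :
  (0 < #|X|)%N -> (0 < #|G|)%N ->
  1 - eps <= prob R [pred x | k <= log2 (preim_size F x)%:R] ->
  1 - (eps + 1%:R * expR (- s * ln 2)) <=
  prob R [pred xg : X * G | k - l%:R - s <=
     log2 (preim_size (fun xg : X * G => (F xg.1, xg.2, h xg.2 xg.1)) xg)%:R].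
Proof.
move=> X0 G0.
set E := expR (- s * ln 2).
have E0 : 0 < E by apply: expR_gt0.
rewrite !probE card_prod natrM sum_pair.
have Xr : 0 < (#|X|%:R : R) by rewrite ltr0n.
have Gr : 0 < (#|G|%:R : R) by rewrite ltr0n.
rewrite ler_pdivlMr // => hyp.
rewrite ler_pdivlMr ?mulr_gt0 //.
set SP := \sum_x _ in hyp.
set T := expR ((k - l%:R - s) * ln 2).
set bad := fun (g : G) (x : X) =>
  ((expR (k * ln 2) <= #|[set x' | F x' == F x]|%:R) &&
   (#|[set x' | (F x' == F x) && (h g x' == h g x)]|%:R < T))%R.
have H1 : \sum_x \sum_(g : G) ((k <= log2 (preim_size F x)%:R))%R%:R <=
   \sum_x \sum_(g : G) ((k - l%:R - s <=
     log2 (preim_size (fun xg : X * G => (F xg.1, xg.2, h xg.2 xg.1)) (x, g))%:R))%R%:R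
   + \sum_x \sum_(g : G) (bad g x)%:R :> R.
  rewrite -big_split; apply: ler_sum => x _.
  rewrite -big_split; apply: ler_sum => g _ /=.
  rewrite /preim_size /= preim_pair log2_geE; last first.
    by apply: (@card_self_gt0 _ (fun x x' => F x' == F x)).
  rewrite log2_geE; last first.
    by apply: (@card_self_gt0 _ (fun x x' => (F x' == F x) && (h g x' == h g x))); rewrite !eqxx.
  rewrite /bad -/T.
  case: (expR (k * ln 2) <= _); last by rewrite addr_ge0 ?ler0n.
  by case: leP => _ /=; rewrite ?addr0 ?add0r.
have H2 : \sum_x \sum_(g : G) (bad g x)%:R <= \sum_(g : G) (#|X|%:R * E).
  rewrite exchange_big; apply: ler_sum => g _.
  have := @bad_bound R _ _ _ F (h g) k (k - l%:R - s).
  rewrite -/T card_BS -e2_nat.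
  have -> : expR (l%:R * ln 2) * T / expR (k * ln 2) = E.
    by rewrite /T /E -expRD -expRB; congr expR; ring.
  by [].
have H3 : \sum_x \sum_(g : G) ((k <= log2 (preim_size F x)%:R))%R%:R
    = #|G|%:R * SP :> R.
  rewrite /SP mulr_sumr; apply: eq_bigr => x _.
  by rewrite sum_constT.
rewrite sum_constT in H2.
rewrite H3 in H1.
have H4 : (1 - eps) * #|X|%:R * #|G|%:R <= SP * #|G|%:R.
  by apply: ler_wpM2r => //; apply: ltW.
lra.
Qed.

End P1b.



Section Negl.
Variable R : realType.

Lemma inv_exprS (x : R) (c : nat) : x != 0 -> (x ^+ c.+1)^-1 * x = (x ^+ c)^-1.
Proof. by move=> x0; rewrite exprSr invfM -mulrA mulVf ?mulr1. Qed.

Lemma negl_add (eps s : nat -> R) (C : nat) :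
  negligible eps -> omega_log s ->
  negligible (fun n => eps n + C%:R * expR (- s n * ln 2)).
Proof.
move=> Heps Hs c.
have [N1 HN1] := Heps c.+1.
have Dpos : 0 < (c.+2)%:R / ln (2 : R) by rewrite divr_gt0 ?ln2_gt0 ?ltr0n.
have [N2 HN2] := Hs _ Dpos.
exists (maxn (maxn N1 N2) (C + 2)) => n.
rewrite !geq_max => /andP[/andP[n1 n2] nC].
set nr := (n%:R : R).
have nr2 : 2 <= nr by rewrite /nr ler_nat (leq_trans _ nC) // leq_addl.
have nrC : C%:R <= nr by rewrite /nr ler_nat (leq_trans _ nC) // leq_addr.
have nr0 : 0 < nr by apply: lt_le_trans nr2.
have nrn0 : nr != 0 by rewrite gt_eqF.
set w := (nr ^+ c)^-1.
set a := (nr ^+ c.+1)^-1.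
set b := (nr ^+ c.+2)^-1.
have aw : a * nr = w by rewrite /a inv_exprS.
have ba : b * nr = a by rewrite /b inv_exprS.
have a0 : 0 <= a by rewrite /a invr_ge0 exprn_ge0 // ltW.
have b0 : 0 <= b by rewrite /b invr_ge0 exprn_ge0 // ltW.
set e := expR (- s n * ln 2).
have e0 : 0 <= e by apply: ltW; apply: expR_gt0.
have eb : e <= b.
  rewrite /b -expR_nat_ln // -expRN /e ler_expR.
  have := HN2 n n2; rewrite mulrAC ler_pdivrMr ?ln2_gt0 // => H.
  lra.
have epsa : `|eps n| <= a by apply: HN1.
have C0 : 0 <= (C%:R : R) by apply: ler0n.
have h1 : C%:R * e <= C%:R * b by apply: ler_wpM2l.
have h2 : C%:R * b <= nr * b by apply: ler_wpM2r.
have h3 : 2 * a <= nr * a by apply: ler_wpM2r.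
apply: (le_trans (ler_normD _ _)).
rewrite (ger0_norm (mulr_ge0 C0 e0)).
have : nr * b = a by rewrite mulrC.
have : nr * a = w by rewrite mulrC.
lra.
Qed.

End Negl.



Section P2.
Variable R : realType.

Lemma coll_count nin l (G : finType) (h : G -> BS nin -> BS l) :
  pairwise_independent R h -> (0 < #|G|)%N ->
  forall x x', x' != x ->
  \sum_g (h g x' == h g x)%:R = #|G|%:R / (2 ^ l)%:R :> R.
Proof.
move=> Hpi G0 x x' ne.
have E : forall g, (h g x' == h g x)%:R =
    \sum_y ((h g x' == y) && (h g x == y))%:R :> R.
  move=> g; rewrite -(@sum_pt R _ (h g x) (fun y => h g x' == y)).
  by apply: eq_bigr => y _; rewrite [h g x == y]eq_sym.
rewrite (eq_bigr _ (fun g _ => E g)) exchange_big /=.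
have G0r : (#|G|%:R : R) != 0 by rewrite pnatr_eq0 -lt0n.
rewrite (eq_bigr (fun _ => #|G|%:R * ((2 ^ l)%:R^-1 * (2 ^ l)%:R^-1))); last first.
  move=> y _; have [Hb [H1 H2]] := Hpi x' x ne y y.
  by rewrite -[X in _ * (X * _)]H1 -[X in _ * (_ * X)]H2 -Hb probE mulrC divfK.
rewrite sum_constT card_BS.
have l0 : ((2 ^ l)%:R : R) != 0 by rewrite pnatr_eq0 expn_eq0.
by field.
Qed.

Lemma markov_part nin l (G : finType) (h : G -> BS nin -> BS l)
    (L : {set BS nin}) (x : BS nin) (M : R) :
  pairwise_independent R h -> (0 < #|G|)%N -> x \in L -> 1 <= M ->
  \sum_g ((M < #|[set x' | (x' \in L) && (h g x' == h g x)]|%:R)%R)%:R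
   <= 2 / M * (#|L|%:R * (#|G|%:R / (2 ^ l)%:R)).
Proof.
move=> Hpi G0 xL M1.
have M0 : 0 < M by lra.
set c := fun g => #|[set x' | (x' \in L) && (h g x' == h g x)]|.
have cZ : forall g, (c g)%:R - 1 =
    \sum_(x' | x' != x) ((x' \in L) && (h g x' == h g x))%:R :> R.
  move=> g; rewrite /c cardR_sum (bigD1 x) //= xL eqxx /=; lra.
apply: (@le_trans _ _ (\sum_g (2 / M * ((c g)%:R - 1)))).
  apply: ler_sum => g _.
  have c1 : (0 < c g)%N.
    by apply/card_gt0P; exists x; rewrite inE xL eqxx.
  case: ltrP => Hc; last first.
    have c1r : 1 <= ((c g)%:R : R) by rewrite ler1n.
    by apply: mulr_ge0; [rewrite divr_ge0 // ltW | lra].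
  have c2 : (2 <= c g)%N.
    have Hc' : M < (c g)%:R := Hc.
    have ne1 : c g <> 1%N by move=> e; move: Hc'; rewrite e; lra.
    lia.
  have c2r : 2 <= ((c g)%:R : R) by rewrite ler_nat.
  rewrite mulrAC ler_pdivlMr // mul1r.
  have Hc' : M < (c g)%:R := Hc.
  lra.
rewrite -mulr_sumr; apply: ler_wpM2l; first by rewrite divr_ge0 ?ltW.
rewrite (eq_bigr _ (fun g _ => cZ g)) exchange_big /=.
rewrite (eq_bigr (fun x' => (x' \in L)%:R * (#|G|%:R / (2 ^ l)%:R))); last first.
  move=> x' ne; case: (x' \in L) => /=; last by rewrite mul0r big1.
  by rewrite mul1r (@coll_count _ _ _ h Hpi G0 x x' ne).
have cL : (#|L|%:R : R) = \sum_x' (x' \in L)%:R.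
  rewrite -sum1_card natr_sum big_mkcond /=; apply: eq_bigr => y _.
  by case: (y \in L).
rewrite cL mulr_suml.
rewrite [X in _ <= X](bigD1 x) //=.
rewrite ler_wpDl //.
by rewrite mulr_ge0 ?divr_ge0 ?ler0n.
Qed.

End P2.



Section P2b.
Variable R : realType.

Definition Lp (X G Y : finType) (h : G -> X -> Y) (L : X -> {set X}) (M : R)
  (xg : X * G) : {set X * G} :=
  if (#|[set x' | (x' \in L xg.1) && (h xg.2 x' == h xg.2 xg.1)]|%:R <= M)%R
  then [set z | (z.1 \in L xg.1) && (h xg.2 z.1 == h xg.2 xg.1) && (z.2 == xg.2)]
  else [set xg].
Arguments Lp {X G Y}.

Lemma card_Lp (X G Y : finType) (h : G -> X -> Y) (L : X -> {set X}) (M : R) xg :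
  1 <= M -> #|Lp h L M xg|%:R <= M.
Proof.
move=> M1; rewrite /Lp; case: ifP => H; last by rewrite cards1.
case: xg H => x g /= H.
apply: le_trans H; rewrite le_eqVlt; apply/orP; left; apply/eqP.
rewrite !cardR_sum sum_pair; apply: eq_bigr => x' _ /=.
exact: (@sum_pt R _ g (fun _ => (x' \in L x) && (h g x' == h g x))).
Qed.

Lemma mem_Lp (X G Y : finType) (h : G -> X -> Y) (L : X -> {set X}) (M : R) xg :
  xg.1 \in L xg.1 -> xg \in Lp h L M xg.
Proof.
move=> H; rewrite /Lp; case: ifP => _; last by rewrite set11.
by rewrite inE H !eqxx.
Qed.

Lemma expR_ge1 (y : R) : 0 <= y -> 1 <= expR y.
Proof. by move=> y0; have := expR_ge1Dx y; lra. Qed.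

Lemma part2_n nin l (G C V : finType) (F : BS nin -> V) (h : G -> BS nin -> BS l)
    (run' : BS nin * G -> C -> BS nin * G) (L : BS nin -> {set BS nin})
    (k s eps : R) :
  pairwise_independent R h -> (0 < #|G|)%N ->
  (forall xg r, (F (run' xg r).1, (run' xg r).2, h (run' xg r).2 (run' xg r).1)
                = (F xg.1, xg.2, h xg.2 xg.1)) ->
  (forall x, (#|L x|%:R : R) <= powR 2 k) -> (forall x, x \in L x) ->
  1 - eps <= prob R [pred xr : BS nin * (G * C) |
                      (run' (xr.1, xr.2.1) xr.2.2).1 \in L xr.1] ->
  1 - (eps + 2%:R * expR (- s * ln 2)) <=
  prob R [pred xr : (BS nin * G) * C |
     run' xr.1 xr.2 \in Lp h L (powR 2 (Num.max (k - l%:R + s) 0)) xr.1].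
Proof.
move=> Hpi G0 Hcoll HL LL.
set E := expR (- s * ln 2).
have E0 : 0 < E by apply: expR_gt0.
rewrite !probE !card_prod !natrM.
have [C0|C0] := eqVneq #|C| 0%N.
  by rewrite C0 !mulr0 !invr0 !mulr0; lra.
have Xr : 0 < (#|BS nin|%:R : R) by rewrite ltr0n card_BS expn_gt0.
have Gr : 0 < (#|G|%:R : R) by rewrite ltr0n.
have Cr : 0 < (#|C|%:R : R) by rewrite ltr0n lt0n.
rewrite ler_pdivlMr ?mulr_gt0 // => hyp.
rewrite ler_pdivlMr ?mulr_gt0 //.
move: hyp; rewrite sum_pair; under eq_bigr do rewrite sum_pair.
move=> hyp.
rewrite sum_pair sum_pair.
set M := 2 `^ Num.max (k - l%:R + s) 0.
have ln20 : 0 <= ln (2 : R) by apply: ltW; apply: ln2_gt0.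
have M1 : 1 <= M.
  rewrite /M powR2E; apply: expR_ge1; apply: mulr_ge0 => //.
  by rewrite le_max lexx orbT.
have M0 : 0 < M by lra.
have MK : expR ((k - l%:R + s) * ln 2) <= M.
  rewrite /M powR2E ler_expR; apply: ler_wpM2r => //.
  by rewrite le_max lexx.
set c := fun x g => (#|[set x' | (x' \in L x) && (h g x' == h g x)]|%:R : R).
set SP := \sum_i _ in hyp.
set SQ := \sum_a _.
have H1 : SP <= SQ + \sum_x \sum_(g : G) \sum_(r : C) ((M < c x g)%R)%:R.
  rewrite /SP /SQ -big_split; apply: ler_sum => x _.
  rewrite -big_split; apply: ler_sum => g _.
  rewrite -big_split; apply: ler_sum => r _ /=.
  rewrite /Lp /=; case: ifP => Hc.
    have -> : (M < c x g) = false by rewrite ltNge -/(c x g) Hc.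
    rewrite addr0.
    case Er: (run' (x, g) r) => [x' g'] /=.
    have := Hcoll (x, g) r; rewrite Er /= => -[_ eg eh].
    rewrite eg in eh; rewrite inE /= eh eg !eqxx !andbT; exact: lexx.
  have -> : (M < c x g) = true by rewrite ltNge -/(c x g) Hc.
  have a1 : (((run' (x, g) r).1 \in L x) : nat)%:R <= (1 : R).
    by case: (_ \in _); rewrite ?ler01 ?lexx.
  have a2 : (0 : R) <= ((run' (x, g) r \in [set (x, g)]) : nat)%:R by apply: ler0n.
  rewrite [true%:R]/=; lra.
have B : forall x, 2 / M * (#|L x|%:R * (#|G|%:R / (2 ^ l)%:R)) <= 2 * E * #|G|%:R.
  move=> x.
  have l0 : (0 : R) < (2 ^ l)%:R by rewrite ltr0n expn_gt0.
  have -> : 2 / M * (#|L x|%:R * (#|G|%:R / (2 ^ l)%:R)) =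
     2 * #|G|%:R * (#|L x|%:R / (M * (2 ^ l)%:R)).
    by field; rewrite !gt_eqF.
  rewrite [2 * E * _]mulrAC; apply: ler_wpM2l; first by rewrite mulr_ge0 // ltW.
  rewrite ler_pdivrMr ?mulr_gt0 //.
  have eq : E * expR ((k - l%:R + s) * ln 2) * expR (l%:R * ln 2) = expR (k * ln 2).
    by rewrite /E -!expRD; congr expR; ring.
  rewrite e2_nat in eq.
  apply: (le_trans (HL x)); rewrite powR2E -eq mulrA.
  apply: ler_wpM2r; first by apply: ltW.
  by apply: ler_wpM2l => //; apply: ltW.
have H2 : \sum_x \sum_(g : G) \sum_(r : C) ((M < c x g)%R)%:R
    <= \sum_(x : BS nin) (#|C|%:R * (2 * E * #|G|%:R)).
  apply: ler_sum => x _.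
  under eq_bigr do rewrite sum_constT.
  rewrite -mulr_sumr; apply: ler_wpM2l; first by apply: ltW.
  apply: le_trans (B x).
  rewrite /c; exact: (@markov_part R _ _ _ h (L x) x M Hpi G0 (LL x) M1).
rewrite sum_constT in H2.
lra.
Qed.

End P2b.


Theorem lemma5p4 (R : realType) (nt m l : nat -> nat) (G : nat -> finType)
    (F : forall n, BS (nt n) -> BS (m n))
    (h : forall n, G n -> BS (nt n) -> BS (l n))
    (G_nonempty : forall n, (0 < #|G n|)%N)
    (G_pi : forall n, pairwise_independent R (@h n)) :
  (* (i) *)
  (forall (k s : nat -> R), omega_log s ->
     real_min_entropy_ge F k ->
     real_min_entropy_ge (Fprime F h)
       (fun n => k n - (l n)%:R - s n))
  /\
  (* (ii) *)
  (forall Eff : forall D : nat -> finType, ralg D -> Prop,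
     (forall A' : ralg (DomF' nt G), Eff _ A' -> Eff _ (proj_alg A')) ->
     forall (k s : nat -> R), omega_log s ->
     acc_max_entropy_le Eff F k ->
     acc_max_entropy_le Eff (Fprime F h)
       (fun n => Num.max (k n - (l n)%:R + s n) 0)).
Proof.
split.
  move=> k s Hs [eps [Hneg Heps]].
  exists (fun n => eps n + 1%:R * expR (- s n * ln 2)); split.
    exact: negl_add.
  move=> n.
  have X0 : (0 < #|BS (nt n)|)%N by rewrite card_BS expn_gt0.
  exact: (@part1_n R (BS (nt n)) (G n) (BS (m n)) (l n) (F n) (h n) (k n) (s n)
            (eps n) X0 (G_nonempty n) (Heps n)).
move=> Eff Heff k s Hs HF A' EffA' collA'.
have collA : collision_finder F (proj_alg A').
  move=> n x [g r] /=.
  have := collA' n (x, g) r.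
  by rewrite /Fprime /= => -[-> _ _].
have [L [HLc [HLm [eps [Hneg [N HN]]]]]] := HF _ (Heff _ EffA') collA.
exists (fun n xg => @Lp R _ _ _ (h n) (L n) (powR 2 (Num.max (k n - (l n)%:R + s n) 0)) xg).
split.
  move=> n xg; apply: card_Lp.
  rewrite powR2E; apply: expR_ge1; apply: mulr_ge0.
    by rewrite le_max lexx orbT.
  by apply: ltW; apply: ln2_gt0.
split.
  by move=> n xg; apply: mem_Lp; apply: HLm.
exists (fun n => eps n + 2%:R * expR (- s n * ln 2)); split.
  exact: negl_add.
exists N => n Nn.
exact: (@part2_n R (nt n) (l n) (G n) (coin A' n) (BS (m n)) (F n) (h n)
          (run A' n) (L n) (k n) (s n) (eps n) (G_pi n) (G_nonempty n)
          (fun xg r => collA' n xg r) (HLc n) (HLm n) (HN n Nn)).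
Qed.
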